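(* Let $F,G$ be planar forests, and let $S(F,G)$ be the set of bijections $\sigma:\mathrm{Vert}(F)\to\mathrm{Vert}(G)$ such that for all vertices $x,y$ of $F$: (1) if $y\geq_{high}x$ then $\sigma(x)\geq_{left}\sigma(y)$; (2) if $y\geq_{left}x$ then $\sigma(x)\geq_{h,l}\sigma(y)$; (3) if $\sigma(y)\geq_{high}\sigma(x)$ then $x\geq_{left}y$; (4) if $\sigma(y)\geq_{left}\sigma(x)$ then $x\geq_{h,l}y$. Then $\langle F,G\rangle=\mathrm{card}(S(F,G))$.
   Context: Let $K$ be a field. Planar rooted trees have their children linearly ordered left to right; a planar forest is a finite, possibly empty, sequence $t_1\cdots t_n$ of planar rooted trees ($1$ = empty forest); $\mathrm{Vert}(F)$ is the vertex set of $F$. $\mathcal{H}$ is the free associative unital $K$-algebra on planar rooted trees, with basis the planar forests and product concatenation. $B^+(F)$ is the tree obtained by grafting the trees of $F$ (in order) on a new common root. $\varepsilon(F)=\delta_{F,1}$. $\Delta$ is the unique linear map with $\Delta(1)=1\otimes1$, $\Delta(xy)=(x\otimes1)\Delta(y)+\Delta(x)(1\otimes y)-x\otimes y$, $\Delta(B^+(x))=B^+(x)\otimes 1+(\mathrm{Id}\otimes B^+)\Delta(x)$. $\gamma$ is linear with $\gamma(t_1\cdots t_n)=\delta_{t_1,\bullet}t_2\cdots t_n$ ($\bullet$ the one-vertex tree), $\gamma(1)=0$. $\langle-,-\rangle$ is the unique bilinear form on $\mathcal{H}$ with $\langle1,x\rangle=\varepsilon(x)$, $\langle xy,z\rangle=\langle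 y\otimes x,\Delta(z)\rangle$ (with $\langle a\otimes b,c\otimes d\rangle=\langle a,c\rangle\langle b,d\rangle$) and $\langle B^+(x),y\rangle=\langle x,\gamma(y)\rangle$. Orders on vertices of a forest $t_1\cdots t_n$: $s\geq_{high}s'$ iff $s'=s$ or $s'$ is an ancestor of $s$; for $\geq_{high}$-incomparable $s,s'$, $s\geq_{left}s'$ iff $s\in t_i,s'\in t_j$ with $i<j$, or both lie in $t_i$ and $s\geq_{left}s'$ in the forest obtained from $t_i$ by deleting its root (recursively); $s\geq_{h,l}s'$ iff $s\geq_{high}s'$ or $s\geq_{left}s'$ (a total order). *)

(* Defs.v *)
From HB Require Import structures.
From mathcomp Require Import all_boot all_order all_algebra.
Set Implicit Arguments. Unset Strict Implicit. Unset Printing Implicit Defensive.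
Import GRing.Theory.
Local Open Scope ring_scope.

Inductive ptree : Type := Node : seq ptree -> ptree.

(** Planar forests = finite sequences of planar trees; [[::]] is the empty forest 1.
    The algebra H has the planar forests as basis, product = concatenation. *)
Definition pforest := seq ptree.

Definition Bplus (F : pforest) : ptree := Node F.

(** Elements of H (x) H given as finite formal sums  sum c * (a (x) b),
    encoded as a list of ((c, a), b). *)
Definition tens (K : fieldType) := seq ((K * pforest) * pforest).

Section Coproduct.
Variable K : fieldType.

(** Delta on a tree t = B^+(x):  Delta(B^+ x) = B^+ x (x) 1 + (Id (x) B^+) Delta(x),
    where Delta on forests is computed via
    Delta(t y) = (t (x) 1) Delta(y) + Delta(t) (1 (x) y) - t (x) y,  Delta(1) = 1 (x) 1. *)
Fixpoint delta_tree (t : ptree) : tens K :=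
  match t with
  | Node F =>
    let fix delta_f (F : pforest) : tens K :=
      match F with
      | [::] => [:: ((1, [::]), [::])]
      | s :: F' =>
          [seq ((p.1.1, s :: p.1.2), p.2) | p <- delta_f F']
          ++ [seq ((p.1.1, p.1.2), p.2 ++ F') | p <- delta_tree s]
          ++ [:: ((-1, [:: s]), F')]
      end in
    ((1, [:: t]), [::]) :: [seq ((p.1.1, p.1.2), [:: Node p.2]) | p <- delta_f F]
  end.

Fixpoint delta (F : pforest) : tens K :=
  match F with
  | [::] => [:: ((1, [::]), [::])]
  | s :: F' =>
      [seq ((p.1.1, s :: p.1.2), p.2) | p <- delta F']
      ++ [seq ((p.1.1, p.1.2), p.2 ++ F') | p <- delta_tree s]
      ++ [:: ((-1, [:: s]), F')]
  end.

End Coproduct.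

Definition eps (K : fieldType) (F : pforest) : K := if F is [::] then 1 else 0.

(** gamma(t1...tn) = delta_{t1,bullet} t2...tn, gamma(1)=0; as an element of H,
    either a basis forest ([Some]) or zero ([None]). *)
Definition gamma (F : pforest) : option pforest :=
  match F with
  | Node [::] :: F' => Some F'
  | _ => None
  end.

(** A bilinear form on H is determined by its values on pairs of basis forests.
    [is_pairing b] says b satisfies the three defining identities of <-,->
    (by bilinearity it suffices to check them on basis elements). *)
Definition is_pairing (K : fieldType) (b : pforest -> pforest -> K) : Prop :=
  [/\ (forall x, b [::] x = eps K x),
      (forall x y z, b (x ++ y) z =
          \sum_(p <- delta K z) p.1.1 * (b y p.1.2 * b x p.2))
    & (forall x y, b [:: Bplus x] y =
          match gamma y with Some y' => b x y' | None => 0 end)].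

(** Vertices.  A vertex of a forest t_1...t_n is addressed by the list of
    (0-based) child positions from the roots: the root of t_i is [:: i], its
    j-th child is [:: i; j], etc. *)
Fixpoint verts_tree (t : ptree) : seq (seq nat) :=
  match t with
  | Node F =>
    let fix vf (F : pforest) (i : nat) : seq (seq nat) :=
      match F with
      | [::] => [::]
      | s :: F' => [seq i :: p | p <- verts_tree s] ++ vf F' i.+1
      end in
    [::] :: vf F 0
  end.

Fixpoint verts_from (F : pforest) (i : nat) : seq (seq nat) :=
  match F with
  | [::] => [::]
  | s :: F' => [seq i :: p | p <- verts_tree s] ++ verts_from F' i.+1
  end.

Definition verts (F : pforest) : seq (seq nat) := verts_from F 0.
Definition Vert (F : pforest) := seq_sub (verts F).

(** s >=_high s'  iff  s' = s or s' is an ancestor of s (address prefix). *)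
Definition geq_high (s s' : seq nat) : bool := prefix s' s.

(** left-of comparison following the recursive definition: different trees
    t_i, t_j with i < j, or same tree and recurse in the forest obtained by
    deleting its root. *)
Fixpoint leftof (s s' : seq nat) : bool :=
  match s, s' with
  | i :: p, j :: q => (i < j)%N || ((i == j) && leftof p q)
  | _, _ => false
  end.

Definition geq_left (s s' : seq nat) : bool :=
  [&& ~~ geq_high s s', ~~ geq_high s' s & leftof s s'].

Definition geq_hl (s s' : seq nat) : bool := geq_high s s' || geq_left s s'.

Definition S_set (F G : pforest) : {set {ffun Vert F -> Vert G}} :=
  [set sigma : {ffun Vert F -> Vert G} |
     [&& injectiveb sigma,
         [forall y : Vert G, exists x : Vert F, sigma x == y] &
         [forall x : Vert F, forall y : Vert F, (x != y) ==>
           [&& (geq_high (val y) (val x) ==> geq_left (val (sigma x)) (val (sigma y))),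
               (geq_left (val y) (val x) ==> geq_hl (val (sigma x)) (val (sigma y))),
               (geq_high (val (sigma y)) (val (sigma x)) ==> geq_left (val x) (val y)) &
               (geq_left (val (sigma y)) (val (sigma x)) ==> geq_hl (val x) (val y))]]]].

(* Main.v *)
Require Import Defs.
From mathcomp Require Import all_boot all_order all_algebra.
From mathcomp Require Import zify.
Set Implicit Arguments. Unset Strict Implicit. Unset Printing Implicit Defensive.
Import GRing.Theory.

Definition sg := (nat * (nat -> nat -> bool))%type.
Definition sjoin (x y : sg) : sg :=
  (x.1 + y.1, fun i j => if i < x.1 then (j < x.1) && x.2 i j
                         else (x.1 <= j) && y.2 (i - x.1) (j - x.1))%N.
Definition snode (x : sg) : sg :=
  (x.1.+1, fun i j => (i < x.1) && ((j == x.1) || ((j < x.1) && x.2 i j)))%N.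
Definition snil : sg := (0%N, fun _ _ => false).

Fixpoint tsig (t : ptree) : sg :=
  match t with Node F => snode (foldr (fun s acc => sjoin (tsig s) acc) snil F) end.
Definition fsig (F : pforest) : sg := foldr (fun s acc => sjoin (tsig s) acc) snil F.

Lemma tsigE F : tsig (Node F) = snode (fsig F).
Proof. by []. Qed.
Lemma fsig_cons s F : fsig (s :: F) = sjoin (tsig s) (fsig F).
Proof. by []. Qed.

Definition seqv (x y : sg) := x.1 = y.1 /\
  forall i j, (i < x.1)%N -> (j < x.1)%N -> x.2 i j = y.2 i j.

Lemma seqv_refl x : seqv x x. Proof. by split. Qed.
Lemma seqv_sym x y : seqv x y -> seqv y x.
Proof. by case=> e h; split=> // i j; rewrite -e => ??; rewrite h. Qed.
Lemma seqv_trans x y z : seqv x y -> seqv y z -> seqv x z.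
Proof. case=> e h [e' h']; split; first by rewrite e. 
  by move=> i j ??; rewrite h // h' // -e. Qed.

Lemma sjoin_eqv x x' y y' : seqv x x' -> seqv y y' -> seqv (sjoin x y) (sjoin x' y').
Proof.
move: x x' y y' => [m a] [m' a'] [n c] [n' c'] [/= em ha] [/= en hc]; subst.
split=> //= i j Hi Hj; case: (ltnP i m') => H1 /=.
  by case: (ltnP j m') => //= H2; rewrite ha.
case: (leqP m' j) => //= H2; rewrite hc //; lia.
Qed.

Lemma snode_eqv x x' : seqv x x' -> seqv (snode x) (snode x').
Proof.
move: x x' => [m a] [m' a'] [/= em ha]; subst; split=> //= i j Hi Hj.
by case: (ltnP i m') => //= Hi'; case: (ltnP j m') => //= Hj'; rewrite ?ha ?orbF.
Qed.

Lemma sjoin_assoc x y z : seqv (sjoin x (sjoin y z)) (sjoin (sjoin x y) z).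
Proof.
move: x y z => [m a] [n c] [p d]; split=> /=; first by rewrite addnA.
move=> i j _ _.
case: (ltnP i m) => Hi.
  rewrite (ltn_addr _ Hi) /=; case: (ltnP j m) => Hj /=; last by rewrite andbF.
  by rewrite (ltn_addr _ Hj).
case: (ltnP i (m + n)) => Hi2.
  have -> : (i - m < n)%N by lia.
  case: (ltnP j m) => Hj /=. by rewrite andbF. 
  by case: (ltnP j (m+n)) => Hj2; [have -> : (j - m < n)%N by lia | have -> : (j - m < n)%N = false by lia].
have -> : (i - m < n)%N = false by lia.
have -> : (i - m - n = i - (m + n))%N by lia.
case: (ltnP j m) => Hj /=. 
  by have -> : (m + n <= j)%N = false by lia.
have -> : (j - m - n = j - (m + n))%N by lia.
by case: (ltnP j (m + n)) => Hj2; [have -> : (n <= j - m)%N = false by lia|have -> : (n <= j - m)%N by lia].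
Qed.

Lemma sjoin_nil x : seqv (sjoin x snil) x.
Proof. case: x => m a; split=> /=; first by rewrite addn0.
by move=> i j Hi Hj; rewrite addn0 in Hi Hj; rewrite Hi Hj. Qed.

Lemma fsig_cat F G : seqv (fsig (F ++ G)) (sjoin (fsig F) (fsig G)).
Proof.
elim: F => [|s F IH] /=.
  case: (fsig G) => n c; split=> // i j _ _ /=; rewrite ?ltn0 ?leq0n ?subn0 //.
apply: seqv_trans (sjoin_eqv (seqv_refl _) IH) _; exact: sjoin_assoc.
Qed.

Definition top (k : nat) (x : sg) : sg := (k, x.2).
Definition rest (k : nat) (x : sg) : sg := (x.1 - k, fun i j => x.2 (i + k) (j + k))%N.

Definition ptree_ind2 (P : ptree -> Prop) (Q : pforest -> Prop)
  (H0 : Q [::]) (Hc : forall t F, P t -> Q F -> Q (t :: F))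
  (HN : forall F, Q F -> P (Node F)) : forall t, P t :=
  fix f t := match t with Node F => HN F
    ((fix g F := match F return Q F with [::] => H0 | s :: F' => Hc s F' (f s) (g F') end) F) end.

Lemma forest_ind2 (P : ptree -> Prop) (Q : pforest -> Prop)
  (H0 : Q [::]) (Hc : forall t F, P t -> Q F -> Q (t :: F))
  (HN : forall F, Q F -> P (Node F)) : forall F, Q F.
Proof. move=> F; elim: F => // s F IH; apply: (Hc) => //; exact: (ptree_ind2 H0 Hc HN). Qed.

Lemma delta_treeE (K : fieldType) F : delta_tree K (Node F) =
  ((1%R, [:: Node F]), [::]) :: [seq ((p.1.1, p.1.2), [:: Node p.2]) | p <- delta K F].
Proof.
rewrite /=; congr (_ :: _).
Qed.

Section P2s.
Local Open Scope ring_scope.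

Section Delta.
Variable K : fieldType.
Definition resp (phi : sg -> sg -> K) :=
  forall x x' y y', seqv x x' -> seqv y y' -> phi x y = phi x' y'.

Definition PT (t : ptree) := forall phi, resp phi ->
  \sum_(p <- delta_tree K t) p.1.1 * phi (fsig p.1.2) (fsig p.2) =
  \sum_(0 <= k < (tsig t).1.+1) phi (top k (tsig t)) (rest k (tsig t)).
Definition QF (F : pforest) := forall phi, resp phi ->
  \sum_(p <- delta K F) p.1.1 * phi (fsig p.1.2) (fsig p.2) =
  \sum_(0 <= k < (fsig F).1.+1) phi (top k (fsig F)) (rest k (fsig F)).

Lemma QF_nil : QF [::].
Proof.
move=> phi Hphi; rewrite /= big_cons big_nil big_nat1 addr0 mul1r.
apply: Hphi; split=> //.
Qed.

Lemma QF_cons s F : PT s -> QF F -> QF (s :: F).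
Proof.
move=> IHs IHF phi Hphi.
rewrite [delta K (s :: F)]/= !big_cat /= !big_map big_cons big_nil addr0.
set S := tsig s; set Z := fsig F; set J := fsig (s :: F).
have HJ : J = sjoin S Z by [].
set T := fun k => phi (top k J) (rest k J).
have -> : \sum_(0 <= k < J.1.+1) phi (top k J) (rest k J) = \sum_(0 <= k < J.1.+1) T k by [].
have E1 : \sum_(i <- delta K F) i.1.1 * phi (fsig (s :: i.1.2)) (fsig i.2)
        = \sum_(0 <= k < Z.1.+1) T (k + S.1)%N.
  rewrite (IHF (fun x y => phi (sjoin S x) y)); last first.
    by move=> x x' y y' ex ey; apply: Hphi => //; apply: sjoin_eqv => //; exact: seqv_refl.
  apply: eq_big_nat => k /andP[_ Hk]; rewrite /T; apply: Hphi.
    rewrite HJ addnC; exact: seqv_refl.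
  rewrite HJ /S /Z; case: (tsig s) (fsig F) Hk => [m a] [n c] /= Hk; split=> /=; first by lia.
  move=> i j Hi Hj; rewrite (_ : (i + (k + m) < m)%N = false); last by lia.
  rewrite (_ : (m <= j + (k + m))%N); last by lia.
  by rewrite /= !(_ : forall u, (u + (k + m) - m = u + k)%N) //; move=> u; lia.
have E2 : \sum_(i <- delta_tree K s) i.1.1 * phi (fsig i.1.2) (fsig (i.2 ++ F))
        = \sum_(0 <= k < S.1.+1) T k.
  transitivity (\sum_(i <- delta_tree K s) i.1.1 * (fun x y => phi x (sjoin y Z)) (fsig i.1.2) (fsig i.2)).
    apply: eq_bigr => p _ /=; congr (_ * _); apply: Hphi; first exact: seqv_refl.
    exact: fsig_cat.
  rewrite (IHs (fun x y => phi x (sjoin y Z))); last first.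
    by move=> x x' y y' ex ey; apply: Hphi => //; apply: sjoin_eqv => //; exact: seqv_refl.
  apply: eq_big_nat => k /andP[_ Hk]; rewrite /T; apply: Hphi.
    rewrite HJ /S /Z; case: (tsig s) (fsig F) Hk => [m a] [n c] /= Hk; split=> //= i j Hi Hj.
    by rewrite (_ : (i < m)%N); [rewrite (_ : (j < m)%N) | lia]; lia.
  rewrite HJ /S /Z; case: (tsig s) (fsig F) Hk => [m a] [n c] /= Hk; split=> /=; first by lia.
  move=> i j Hi Hj.
  case: (ltnP i (m - k)) => H1.
    rewrite (_ : (i + k < m)%N); last by lia.
    by congr (_ && _); lia.
  rewrite (_ : (i + k < m)%N = false); last by lia.
  rewrite (_ : (i - (m - k) = i + k - m)%N); last by lia.
  rewrite (_ : (j - (m - k) = j + k - m)%N); last by lia.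
  by congr (_ && _); lia.
have E3 : phi (fsig [:: s]) (fsig F) = T S.1.
  rewrite /T; apply: Hphi.
    apply: seqv_trans (sjoin_nil _) _.
    rewrite HJ /S /Z; case: (tsig s) (fsig F) => [m a] [n c]; split=> //= i j Hi Hj; by rewrite Hi Hj.
  rewrite HJ /S /Z; case: (tsig s) (fsig F) => [m a] [n c]; split=> /=; first by lia.
  move=> i j Hi Hj; rewrite (_ : (i + m < m)%N = false); last by lia.
  by rewrite (_ : (m <= j + m)%N) ?addnK //; lia.
rewrite E1 E2 E3 mulN1r.
rewrite HJ /=.
have -> : \sum_(0 <= k < Z.1.+1) T (k + S.1)%N = \sum_(0 + S.1 <= k < (S.1 + Z.1).+1) T k.
  rewrite big_addn.
  by rewrite (_ : ((S.1 + Z.1).+1 - S.1 = Z.1.+1)%N) //; lia.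
rewrite add0n (@big_cat_nat _ _ _ S.1 0 (S.1 + Z.1).+1) //=; last by lia.
rewrite (@big_nat_recr _ _ _ S.1 0) //=.
by rewrite addrK addrC.
Qed.

Lemma PT_node F : QF F -> PT (Node F).
Proof.
move=> IHF phi Hphi.
rewrite delta_treeE big_cons big_map mul1r tsigE.
set X := fsig F.
rewrite (@big_nat_recr _ _ _ X.1.+1) //= addrC; congr (_ + _).
  apply: (Hphi).
    apply: seqv_trans (sjoin_nil _) _; by split.
  by split=> //=; rewrite subnn.
transitivity (\sum_(i <- delta K F) i.1.1 * (fun x y => phi x (snode y)) (fsig i.1.2) (fsig i.2)).
  apply: eq_bigr => p _ /=; congr (_ * _); apply: Hphi; first exact: seqv_refl.
  exact: sjoin_nil.
rewrite (IHF (fun x y => phi x (snode y))); last first.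
  by move=> x x' y y' ex ey; apply: Hphi => //; apply: snode_eqv.
rewrite /X; case: (fsig F) => m a /=.
apply: eq_big_nat => k /andP[_ Hk]; apply: (Hphi).
  split=> //= i j Hi Hj.
  rewrite (_ : (i < m)%N); last by lia.
  rewrite (_ : (j == m)%N = false); last by lia.
  by rewrite (_ : (j < m)%N) //; lia.
split=> /=; first by lia.
move=> i j Hi Hj.
rewrite (_ : (i < m - k)%N = (i + k < m)%N); last by lia.
rewrite (_ : ((j == m - k) = (j + k == m))%N); last by lia.
by rewrite (_ : (j < m - k)%N = (j + k < m)%N); last by lia.
Qed.

Lemma delta_sum F : QF F.
Proof. exact: (forest_ind2 QF_nil QF_cons PT_node). Qed.
End Delta.

End P2s.

Definition scomp (x y : sg) : bool := (x.1 == y.1) &&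
  all (fun i => all (fun j => ~~ (x.2 i j && y.2 (x.1.-1 - j) (x.1.-1 - i))) (iota 0 x.1)) (iota 0 x.1).

Lemma scompP x y : reflect (x.1 = y.1 /\ forall i j, i < x.1 -> j < x.1 ->
   ~~ (x.2 i j && y.2 (x.1.-1 - j) (x.1.-1 - i))) (scomp x y).
Proof.
apply: (iffP andP) => [[/eqP e /allP H]|[e H]].
  split=> // i j Hi Hj; have := H i; rewrite mem_iota add0n Hi => /(_ isT) /allP; apply.
  by rewrite mem_iota add0n.
split; first by apply/eqP.
apply/allP => i; rewrite mem_iota add0n => Hi; apply/allP => j; rewrite mem_iota add0n => Hj.
exact: H.
Qed.

Lemma comp_eqv x x' y y' : seqv x x' -> seqv y y' -> scomp x y = scomp x' y'.
Proof.
move=> [ex hx] [ey hy]; apply/scompP/scompP => -[e H]; split.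
- by rewrite -ex -ey.
- move=> i j Hi Hj; rewrite -ex in Hi Hj *; rewrite -hx // -hy; try lia; exact: H.
- by rewrite ex ey.
- move=> i j Hi Hj; rewrite hx // hy ex; try lia; rewrite -?ex; have := H i j; rewrite -ex; apply; lia.
Qed.

Lemma tsig_pos t : 0 < (tsig t).1.
Proof. by case: t. Qed.

Lemma comp_nil G : scomp snil (fsig G) = if G is [::] then true else false.
Proof.
case: G => [|t G]; first by apply/scompP; split.
apply/scompP => -[/= e _]; have := tsig_pos t; lia.
Qed.

Lemma comp_node x G : scomp (fsig [:: Node x]) (fsig G) =
  match gamma G with Some G' => scomp (fsig x) (fsig G') | None => false end.
Proof.
rewrite (@comp_eqv _ (snode (fsig x)) _ (fsig G)); last exact: seqv_refl; last exact: sjoin_nil.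
case: G => [|t G] /=.
  by apply/scompP => -[].
case: t => [[|s x'] ] /=.
- rewrite /= -/(fsig G); case: (fsig x) (fsig G) => [m a] [n c].
  apply/scompP/scompP => /= -[e H]; split; try lia.
  + move=> i j Hi Hj; have := H i j (ltnW Hi) (ltnW Hj).
    rewrite Hi Hj (_ : (j == m) = false); last by lia.
    rewrite (_ : (m - j < 1) = false); last by lia.
    rewrite (_ : 0 < m - i); last by lia.
    rewrite (_ : (m - j - 1 = m.-1 - j)); last by lia.
    by rewrite (_ : (m - i - 1 = m.-1 - i)) ?andbT //; lia.
  + move=> i j Hi Hj /=; case: (ltnP i m) => //= Hi'.
    case: (eqVneq j m) => [-> | Hjm] /=.
      by rewrite subnn /= andbF.
    have Hj' : (j < m)%N by lia.
    rewrite Hj' /=; case: (boolP (a i j)) => //= Ha.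
    rewrite (_ : (m - j < 1) = false); last by lia.
    rewrite (_ : 0 < m - i) /=; last by lia.
    have := H i j Hi' Hj'; rewrite Ha /=.
    rewrite (_ : (m - j - 1 = m.-1 - j)); last by lia.
    by rewrite (_ : (m - i - 1 = m.-1 - i)); last by lia.
- have Hy : 0 < (fsig (s :: x')).1 by rewrite /= addn_gt0 tsig_pos.
  change (scomp (snode (fsig x)) (sjoin (snode (fsig (s::x'))) (fsig G)) = false).
  move: Hy; case: (fsig x) (fsig (s::x')) (fsig G) => [m a] [p d] [n c] /= Hp.
  apply/negbTE/negP => /scompP /= -[e H].
  have := H (m - p) m ltac:(lia) ltac:(lia).
  rewrite (_ : m - p < m); last by lia.
  rewrite eqxx subnn /= (_ : m - (m - p) = p); last by lia.
  by rewrite Hp ltnSn eqxx.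
Qed.

Lemma comp_split T Y Z : scomp (sjoin T Y) Z =
  [&& (Y.1 <= Z.1), scomp Y (top Y.1 Z) & scomp T (rest Y.1 Z)].
Proof.
case: T Y Z => [m a] [n c] [N d] /=.
apply/scompP/and3P => /= [[e H]|[hN /scompP [/= e1 H1] /scompP [/= e2 H2]]].
  split; first by lia.
  - apply/scompP; split=> //= i j Hi Hj.
    have := H (i + m) (j + m) ltac:(lia) ltac:(lia).
    rewrite (_ : i + m < m = false) /=; last by lia.
    rewrite (_ : m <= j + m) /= ?addnK; last by lia.
    rewrite (_ : (m + n).-1 - (j + m) = n.-1 - j); last by lia.
    by rewrite (_ : (m + n).-1 - (i + m) = n.-1 - i); last by lia.
  - apply/scompP; split=> /=; first by lia.
    move=> i j Hi Hj; have := H i j ltac:(lia) ltac:(lia).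
    rewrite Hi Hj /=.
    rewrite (_ : (m + n).-1 - j = m.-1 - j + n); last by lia.
    by rewrite (_ : (m + n).-1 - i = m.-1 - i + n); last by lia.
split; first by lia.
move=> i j Hi Hj.
case: (ltnP i m) => Hi'.
  case: (ltnP j m) => Hj' /=; last by [].
  have := H2 i j Hi' Hj'.
  rewrite (_ : (m + n).-1 - j = m.-1 - j + n); last by lia.
  by rewrite (_ : (m + n).-1 - i = m.-1 - i + n); last by lia.
case: (ltnP j m) => Hj' /=; first by [].
have := H1 (i - m) (j - m) ltac:(lia) ltac:(lia).
rewrite (_ : (m + n).-1 - j = n.-1 - (j - m)); last by lia.
by rewrite (_ : (m + n).-1 - i = n.-1 - (i - m)); last by lia.
Qed.

Section P4s.
Local Open Scope ring_scope.

Lemma sum_comp (K : fieldType) (T Y Z : sg) :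
  \sum_(0 <= k < Z.1.+1) (scomp Y (top k Z))%:R * (scomp T (rest k Z))%:R =
  (scomp (sjoin T Y) Z)%:R :> K.
Proof.
have H0 : forall k, k != Y.1 -> scomp Y (top k Z) = false.
  by move=> k hk; apply/negbTE/negP => /scompP [/= e _]; rewrite e eqxx in hk.
rewrite comp_split.
case: (leqP Y.1 Z.1) => hY /=.
  rewrite (@big_cat_nat _ _ _ Y.1) //=; last by lia.
  rewrite (@big_ltn _ _ _ Y.1 Z.1.+1) ?ltnS //=.
  rewrite big1_seq ?add0r; last first.
    move=> k /andP[_]; rewrite mem_index_iota => Hk; rewrite H0 ?mul0r //; lia.
  rewrite big1_seq ?addr0 -?natrM ?mulnb //.
  move=> k /andP[_]; rewrite mem_index_iota => Hk; rewrite H0 ?mul0r //; lia.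
rewrite big1_seq //.
move=> k /andP[_]; rewrite mem_index_iota => Hk; rewrite H0 ?mul0r //; lia.
Qed.

Lemma b_comp (K : fieldType) (b : pforest -> pforest -> K) :
  is_pairing b -> forall F G, b F G = (scomp (fsig F) (fsig G))%:R.
Proof.
case=> H1 H2 H3.
suff: forall n F, ((fsig F).1 < n)%N -> forall G, b F G = (scomp (fsig F) (fsig G))%:R.
  by move=> H F; apply: (H (fsig F).1.+1).
elim=> [|n IH] F //.
case: F => [|t F'] HF G.
  by rewrite H1 comp_nil; case: G.
case: F' HF => [|s F''] HF.
  case: t HF => x HF.
  rewrite (H3 x G) comp_node.
  case: (gamma G) => [G'|] //; apply: IH.
  by change (is_true ((fsig x).1.+1 + 0 < n.+1)%N) in HF; lia.
set F' := s :: F''.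
change (is_true ((tsig t).1 + ((tsig s).1 + (fsig F'').1) < n.+1)%N) in HF.
have HF' : ((fsig F').1 < n)%N.
  change (is_true ((tsig s).1 + (fsig F'').1 < n)%N); have := tsig_pos t; lia.
have Ht : ((fsig [:: t]).1 < n)%N.
  change (is_true ((tsig t).1 + 0 < n)%N); have := tsig_pos s; lia.
rewrite (H2 [:: t] F' G).
transitivity (\sum_(p <- delta K G) p.1.1 *
   (fun u v => (scomp (fsig F') u)%:R * (scomp (fsig [:: t]) v)%:R) (fsig p.1.2) (fsig p.2)).
  by apply: eq_bigr => p _; rewrite IH // IH.
rewrite (@delta_sum K G (fun u v => (scomp (fsig F') u)%:R * (scomp (fsig [:: t]) v)%:R)); last first.
  move=> x x' y y' ex ey /=; rewrite (comp_eqv (seqv_refl _) ex).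
  by rewrite (comp_eqv (seqv_refl _) ey).
transitivity (\sum_(0 <= k < (fsig G).1.+1) (scomp (fsig F') (top k (fsig G)))%:R *
     (scomp (tsig t) (rest k (fsig G)))%:R : K).
  apply: eq_bigr => k _; congr (_ * _); congr (_%:R).
  by rewrite (@comp_eqv (sjoin (tsig t) snil) (tsig t) _ _ (sjoin_nil _) (seqv_refl _)).
by rewrite sum_comp.
Qed.

End P4s.

Fixpoint hl_tree (t : ptree) : seq (seq nat) :=
  match t with Node F =>
    (let fix hf (F : pforest) (i : nat) : seq (seq nat) :=
       match F with [::] => [::] | s :: F' => map (cons i) (hl_tree s) ++ hf F' i.+1 end
     in hf F 0) ++ [:: [::]]
  end.
Fixpoint hl_from (F : pforest) (i : nat) : seq (seq nat) :=
  match F with [::] => [::] | s :: F' => map (cons i) (hl_tree s) ++ hl_from F' i.+1 end.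

Lemma hl_treeE F : hl_tree (Node F) = hl_from F 0 ++ [:: [::]].
Proof. rewrite /=; congr (_ ++ _); elim: F 0 => //= s F IH i; by rewrite IH. Qed.
Lemma verts_treeE F : verts_tree (Node F) = [::] :: verts_from F 0.
Proof. rewrite /=; congr (_ :: _); elim: F 0 => //= s F IH i; by rewrite IH. Qed.

Lemma perm_hl_tree t : perm_eq (hl_tree t) (verts_tree t).
Proof.
move: t; apply: (@ptree_ind2 (fun t => perm_eq (hl_tree t) (verts_tree t)) (fun F => forall i, perm_eq (hl_from F i) (verts_from F i))).
- by move=> i.
- move=> t F Ht HF i /=; apply: perm_cat => //; exact: perm_map.
- by move=> F HF; rewrite hl_treeE verts_treeE cats1 perm_rcons perm_cons.
Qed.

Lemma perm_hl_from F i : perm_eq (hl_from F i) (verts_from F i).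
Proof. elim: F i => //= t F IH i; apply: perm_cat => //; exact/perm_map/perm_hl_tree. Qed.

Lemma size_hl_tree t : size (hl_tree t) = (tsig t).1.
Proof.
move: t; apply: (@ptree_ind2 (fun t => size (hl_tree t) = (tsig t).1) (fun F => forall i, size (hl_from F i) = (fsig F).1)).
- by [].
- by move=> t F Ht HF i /=; rewrite size_cat size_map Ht HF.
- by move=> F HF; rewrite hl_treeE size_cat HF addn1.
Qed.

Lemma size_hl_from F i : size (hl_from F i) = (fsig F).1.
Proof. elim: F i => //= t F IH i; by rewrite size_cat size_map size_hl_tree IH. Qed.

Lemma hl_from_head F i v : v \in hl_from F i -> exists k q, v = k :: q /\ i <= k.
Proof.
elim: F i => //= t F IH i; rewrite mem_cat => /orP[/mapP[q _ ->]|/IH [k [q [-> Hk]]]].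
  by exists i, q.
by exists k, q; split=> //; lia.
Qed.

Lemma high_cons a p q : geq_high (a :: p) (a :: q) = geq_high p q.
Proof. by rewrite /geq_high /= eqxx. Qed.
Lemma high_diff a b p q : a != b -> geq_high (a :: p) (b :: q) = false.
Proof. by move=> H; rewrite /geq_high /= eq_sym (negbTE H). Qed.
Lemma left_cons a p q : geq_left (a :: p) (a :: q) = geq_left p q.
Proof. by rewrite /geq_left !high_cons /= ltnn eqxx. Qed.
Lemma hl_cons a p q : geq_hl (a :: p) (a :: q) = geq_hl p q.
Proof. by rewrite /geq_hl high_cons left_cons. Qed.
Lemma left_lt a b p q : a < b -> geq_left (a :: p) (b :: q).
Proof.
move=> H; rewrite /geq_left !high_diff //=; [by rewrite H | |]; rewrite ?neq_ltn H ?orbT //.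
Qed.

Lemma nth_hl_from_head F k i : i < (fsig F).1 ->
  exists a q, nth [::] (hl_from F k) i = a :: q /\ k <= a.
Proof. move=> Hi; apply: hl_from_head; apply: mem_nth; by rewrite size_hl_from. Qed.

Lemma anc_tree t : forall i j, i < (tsig t).1 -> j < (tsig t).1 ->
  (tsig t).2 i j = (i != j) && geq_high (nth [::] (hl_tree t) i) (nth [::] (hl_tree t) j).
Proof.
move: t; apply: (@ptree_ind2 (fun t => forall i j, i < (tsig t).1 -> j < (tsig t).1 ->
  (tsig t).2 i j = (i != j) && geq_high (nth [::] (hl_tree t) i) (nth [::] (hl_tree t) j))
  (fun F => forall k i j, i < (fsig F).1 -> j < (fsig F).1 ->
  (fsig F).2 i j = (i != j) && geq_high (nth [::] (hl_from F k) i) (nth [::] (hl_from F k) j))).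
- by [].
- move=> t F Ht HF k i j Hi Hj.
  rewrite [hl_from _ _]/= !nth_cat size_map size_hl_tree.
  change ((if i < (tsig t).1 then (j < (tsig t).1) && (tsig t).2 i j
           else ((tsig t).1 <= j) && (fsig F).2 (i - (tsig t).1) (j - (tsig t).1)) =
          (i != j) && geq_high (if i < (tsig t).1 then nth [::] [seq k :: i0 | i0 <- hl_tree t] i
            else nth [::] (hl_from F k.+1) (i - (tsig t).1))
            (if j < (tsig t).1 then nth [::] [seq k :: i0 | i0 <- hl_tree t] j
            else nth [::] (hl_from F k.+1) (j - (tsig t).1))).
  change (is_true (i < (tsig t).1 + (fsig F).1)) in Hi.
  change (is_true (j < (tsig t).1 + (fsig F).1)) in Hj.
  case: (ltnP i (tsig t).1) => H1; case: (ltnP j (tsig t).1) => H2 /=.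
  + by rewrite !(nth_map [::]) ?size_hl_tree // high_cons Ht.
  + rewrite (nth_map [::]) ?size_hl_tree //.
    have Hj' : j - (tsig t).1 < (fsig F).1 by lia.
    have [a [q [-> Ha]]] := nth_hl_from_head (k.+1) Hj'.
    by rewrite high_diff ?andbF //; lia.
  + rewrite (nth_map [::]) ?size_hl_tree //.
    have Hi' : i - (tsig t).1 < (fsig F).1 by lia.
    have [a [q [-> Ha]]] := nth_hl_from_head (k.+1) Hi'.
    rewrite high_diff ?andbF ?leqNgt ?H2 //; lia.
  + rewrite (HF k.+1); try lia.
- move=> F HF i j Hi Hj; rewrite hl_treeE !nth_cat size_hl_from.
  change (is_true (i < (fsig F).1.+1)) in Hi; change (is_true (j < (fsig F).1.+1)) in Hj.
  change ((i < (fsig F).1) && ((j == (fsig F).1) || ((j < (fsig F).1) && (fsig F).2 i j)) =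
    (i != j) && geq_high (if i < (fsig F).1 then nth [::] (hl_from F 0) i else nth [::] [:: [::]] (i - (fsig F).1))
     (if j < (fsig F).1 then nth [::] (hl_from F 0) j else nth [::] [:: [::]] (j - (fsig F).1))).
  case: (ltnP i (fsig F).1) => H1; case: (ltnP j (fsig F).1) => H2 /=.
  + by rewrite (_ : (j == (fsig F).1) = false) ?(HF 0) //; lia.
  + rewrite (_ : j = (fsig F).1); last by lia.
    by rewrite eqxx subnn /= /geq_high prefix0s (_ : i != (fsig F).1) //; lia.
  + have [a [q [-> Ha]]] := nth_hl_from_head 0 H2.
    by rewrite (_ : i - (fsig F).1 = 0) /= ?andbF //; lia.
  + by rewrite (_ : i = j) ?eqxx //; lia.
Qed.

Lemma anc_from F : forall k i j, i < (fsig F).1 -> j < (fsig F).1 ->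
  (fsig F).2 i j = (i != j) && geq_high (nth [::] (hl_from F k) i) (nth [::] (hl_from F k) j).
Proof.
move: F; apply: (@forest_ind2 (fun t => forall i j, i < (tsig t).1 -> j < (tsig t).1 ->
  (tsig t).2 i j = (i != j) && geq_high (nth [::] (hl_tree t) i) (nth [::] (hl_tree t) j))
  (fun F => forall k i j, i < (fsig F).1 -> j < (fsig F).1 ->
  (fsig F).2 i j = (i != j) && geq_high (nth [::] (hl_from F k) i) (nth [::] (hl_from F k) j))).
- by [].
- move=> t F Ht HF k i j Hi Hj.
  rewrite [hl_from _ _]/= !nth_cat size_map size_hl_tree.
  change ((if i < (tsig t).1 then (j < (tsig t).1) && (tsig t).2 i j
           else ((tsig t).1 <= j) && (fsig F).2 (i - (tsig t).1) (j - (tsig t).1)) =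
          (i != j) && geq_high (if i < (tsig t).1 then nth [::] [seq k :: i0 | i0 <- hl_tree t] i
            else nth [::] (hl_from F k.+1) (i - (tsig t).1))
            (if j < (tsig t).1 then nth [::] [seq k :: i0 | i0 <- hl_tree t] j
            else nth [::] (hl_from F k.+1) (j - (tsig t).1))).
  change (is_true (i < (tsig t).1 + (fsig F).1)) in Hi.
  change (is_true (j < (tsig t).1 + (fsig F).1)) in Hj.
  case: (ltnP i (tsig t).1) => H1; case: (ltnP j (tsig t).1) => H2 /=.
  + by rewrite !(nth_map [::]) ?size_hl_tree // high_cons Ht.
  + rewrite (nth_map [::]) ?size_hl_tree //.
    have Hj' : j - (tsig t).1 < (fsig F).1 by lia.
    have [a [q [-> Ha]]] := nth_hl_from_head (k.+1) Hj'.
    by rewrite high_diff ?andbF //; lia.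
  + rewrite (nth_map [::]) ?size_hl_tree //.
    have Hi' : i - (tsig t).1 < (fsig F).1 by lia.
    have [a [q [-> Ha]]] := nth_hl_from_head (k.+1) Hi'.
    rewrite high_diff ?andbF ?leqNgt ?H2 //; lia.
  + rewrite (HF k.+1); try lia.
- move=> F HF i j Hi Hj; rewrite hl_treeE !nth_cat size_hl_from.
  change (is_true (i < (fsig F).1.+1)) in Hi; change (is_true (j < (fsig F).1.+1)) in Hj.
  change ((i < (fsig F).1) && ((j == (fsig F).1) || ((j < (fsig F).1) && (fsig F).2 i j)) =
    (i != j) && geq_high (if i < (fsig F).1 then nth [::] (hl_from F 0) i else nth [::] [:: [::]] (i - (fsig F).1))
     (if j < (fsig F).1 then nth [::] (hl_from F 0) j else nth [::] [:: [::]] (j - (fsig F).1))).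
  case: (ltnP i (fsig F).1) => H1; case: (ltnP j (fsig F).1) => H2 /=.
  + by rewrite (_ : (j == (fsig F).1) = false) ?(HF 0) //; lia.
  + rewrite (_ : j = (fsig F).1); last by lia.
    by rewrite eqxx subnn /= /geq_high prefix0s (_ : i != (fsig F).1) //; lia.
  + have [a [q [-> Ha]]] := nth_hl_from_head 0 H2.
    by rewrite (_ : i - (fsig F).1 = 0) /= ?andbF //; lia.
  + by rewrite (_ : i = j) ?eqxx //; lia.
Qed.

Lemma hl_nil_r a q : geq_hl (a :: q) [::] && ~~ geq_hl [::] (a :: q).
Proof. by rewrite /geq_hl /geq_left /geq_high /=. Qed.

Lemma hl_lt a b p q : a < b -> geq_hl (a :: p) (b :: q) && ~~ geq_hl (b :: q) (a :: p).
Proof.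
move=> H; rewrite /geq_hl left_lt // orbT andTb (@high_diff b a q p); last by rewrite neq_ltn H orbT.
rewrite /geq_left /= (_ : b < a = false); last by lia.
by rewrite (_ : (b == a) = false) ?andbF //; lia.
Qed.

Definition ordP (V : seq (seq nat)) := forall i j, i < j -> j < size V ->
  geq_hl (nth [::] V i) (nth [::] V j) && ~~ geq_hl (nth [::] V j) (nth [::] V i).

Lemma ord_from F : forall k, ordP (hl_from F k).
Proof.
move: F; apply: (@forest_ind2 (fun t => ordP (hl_tree t)) (fun F => forall k, ordP (hl_from F k))).
- by move=> k i j.
- move=> t F Ht HF k i j Hij; rewrite [hl_from _ _]/= size_cat size_map => Hj.
  rewrite !nth_cat size_map.
  case: (ltnP j (size (hl_tree t))) => H2.
    by rewrite (ltn_trans Hij H2) !(nth_map [::]) ?(ltn_trans Hij H2) // !hl_cons Ht.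
  case: (ltnP i (size (hl_tree t))) => H1.
    rewrite (nth_map [::]) //.
    have Hj' : j - (size (hl_tree t)) < (fsig F).1 by rewrite -(size_hl_from F k.+1); lia.
    have [a [q [-> Ha]]] := nth_hl_from_head (k.+1) Hj'.
    by apply: hl_lt.
  apply: HF; lia.
- move=> F HF i j Hij; rewrite hl_treeE size_cat /= addn1 ltnS => Hj.
  rewrite !nth_cat.
  case: (ltnP j (size (hl_from F 0))) => H2.
    by rewrite (ltn_trans Hij H2); apply: HF.
  have -> : j = size (hl_from F 0) by lia.
  rewrite subnn (_ : i < size (hl_from F 0)); last by lia.
  have Hi' : i < (fsig F).1 by rewrite -(size_hl_from F 0); lia.
  have [a [q [-> Ha]]] := nth_hl_from_head 0 Hi'.
  exact: hl_nil_r.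
Qed.

Lemma hl_refl v : geq_hl v v.
Proof. by rewrite /geq_hl /geq_high prefix_refl. Qed.

Lemma high_hl a b : geq_high a b -> geq_hl a b.
Proof. by rewrite /geq_hl => ->. Qed.

Lemma left_eq a b : geq_left a b = geq_hl a b && ~~ geq_high a b.
Proof. by rewrite /geq_hl /geq_left; case: (geq_high a b); rewrite ?andbT ?andbF. Qed.

Lemma ord_lt V : ordP V -> forall i j, i < size V -> j < size V -> i != j ->
  geq_hl (nth [::] V i) (nth [::] V j) = (i < j).
Proof.
move=> HV i j Hi Hj Hij; case: (ltngtP i j) => H.
- by case/andP: (HV i j H Hj).
- by case/andP: (HV j i H Hi) => _ /negbTE.
- by rewrite H eqxx in Hij.
Qed.

Lemma ordP_uniq V : ordP V -> uniq V.
Proof.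
move=> HV; apply/(uniqP [::]) => i j Hi Hj Heq.
apply/eqP; apply: contraT => Hij.
have Hji : j != i by rewrite eq_sym.
have := ord_lt HV Hi Hj Hij; have := ord_lt HV Hj Hi Hji.
move=> h1 h2; rewrite Heq hl_refl in h1 h2; lia.
Qed.

Lemma dec_rev n (g : nat -> nat) : (forall i, i < n -> g i < n) ->
  (forall i j, i < j -> j < n -> g j < g i) -> forall i, i < n -> g i = n.-1 - i.
Proof.
move=> Hb Hd.
have up : forall i, i < n -> g i <= n.-1 - i.
  elim=> [|i IH] Hi; first by have := Hb 0 Hi; lia.
  have := IH (ltnW Hi); have := Hd i i.+1 (ltnSn i) Hi; lia.
have lo : forall k i, i < n -> n.-1 - i = k -> k <= g i.
  elim=> [|k IH] i Hi Hk //.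
  have Hi1 : i.+1 < n by lia.
  have := IH i.+1 Hi1 ltac:(lia); have := Hd i i.+1 (ltnSn i) Hi1; lia.
move=> i Hi; have := up i Hi; have := lo _ i Hi erefl; lia.
Qed.

Lemma cond_equiv V W : ordP V -> ordP W -> size V = size W -> forall i j,
  i < size V -> j < size V -> i != j ->
  [&& (geq_high (nth [::] V i) (nth [::] V j) ==> geq_left (nth [::] W ((size V).-1 - j)) (nth [::] W ((size V).-1 - i))),
      (geq_left (nth [::] V i) (nth [::] V j) ==> geq_hl (nth [::] W ((size V).-1 - j)) (nth [::] W ((size V).-1 - i))),
      (geq_high (nth [::] W ((size V).-1 - i)) (nth [::] W ((size V).-1 - j)) ==> geq_left (nth [::] V j) (nth [::] V i)) &
      (geq_left (nth [::] W ((size V).-1 - i)) (nth [::] W ((size V).-1 - j)) ==> geq_hl (nth [::] V j) (nth [::] V i))] =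
  ~~ (geq_high (nth [::] V i) (nth [::] V j) && geq_high (nth [::] W ((size V).-1 - j)) (nth [::] W ((size V).-1 - i))) &&
  ~~ (geq_high (nth [::] W ((size V).-1 - i)) (nth [::] W ((size V).-1 - j)) && geq_high (nth [::] V j) (nth [::] V i)).
Proof.
move=> HV HW Hn i j Hi Hj Hij.
set a := nth [::] V j; set b := nth [::] V i.
set a' := nth [::] W ((size V).-1 - j); set b' := nth [::] W ((size V).-1 - i).
have Hj' : (size V).-1 - j < size W by lia.
have Hi' : (size V).-1 - i < size W by lia.
have Hij' : (size V).-1 - j != (size V).-1 - i by lia.
have e1 : geq_hl b a = (i < j) by exact: ord_lt.
have e2 : geq_hl a b = (j < i) by apply: ord_lt; rewrite // eq_sym.
have e3 : geq_hl a' b' = (i < j) by rewrite /a' /b' ord_lt //; lia.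
have e4 : geq_hl b' a' = (j < i) by rewrite /a' /b' ord_lt 1?eq_sym //; lia.
rewrite !left_eq e1 e2 e3 e4.
case: (ltngtP i j) => H /=.
- have -> : geq_high a b = false by apply/negbTE/negP => /high_hl; rewrite e2; lia.
  have -> : geq_high b' a' = false by apply/negbTE/negP => /high_hl; rewrite e4; lia.
  by case: (geq_high b a); case: (geq_high a' b').
- have -> : geq_high b a = false by apply/negbTE/negP => /high_hl; rewrite e1; lia.
  have -> : geq_high a' b' = false by apply/negbTE/negP => /high_hl; rewrite e3; lia.
  by case: (geq_high b' a'); case: (geq_high a b); rewrite ?andbT.
- by rewrite H eqxx in Hij.
Qed.

Section Link.
Variables F G : pforest.
Let V := hl_from F 0.
Let W := hl_from G 0.
Let HV : ordP V := @ord_from F 0.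
Let HW : ordP W := @ord_from G 0.
Let uV : uniq V := ordP_uniq HV.
Let uW : uniq W := ordP_uniq HW.

Lemma memV v : (v \in verts F) = (v \in V).
Proof. by rewrite (perm_mem (perm_hl_from F 0)). Qed.
Lemma memW v : (v \in verts G) = (v \in W).
Proof. by rewrite (perm_mem (perm_hl_from G 0)). Qed.

Definition ixF (x : Vert F) := index (val x) V.
Definition ixG (y : Vert G) := index (val y) W.

Lemma ixF_lt x : ixF x < size V.
Proof. by rewrite /ixF index_mem -memV (valP x). Qed.
Lemma ixG_lt y : ixG y < size W.
Proof. by rewrite /ixG index_mem -memW (valP y). Qed.
Lemma nth_ixF x : nth [::] V (ixF x) = val x.
Proof. by rewrite nth_index // -memV (valP x). Qed.
Lemma nth_ixG y : nth [::] W (ixG y) = val y.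
Proof. by rewrite nth_index // -memW (valP y). Qed.

Lemma card_VF : #|{: Vert F}| = size V.
Proof.
rewrite card_seq_sub; first by rewrite (perm_size (perm_hl_from F 0)).
by rewrite -(perm_uniq (perm_hl_from F 0)).
Qed.
Lemma card_VG : #|{: Vert G}| = size W.
Proof.
rewrite card_seq_sub; first by rewrite (perm_size (perm_hl_from G 0)).
by rewrite -(perm_uniq (perm_hl_from G 0)).
Qed.

Lemma ixF_inj x y : ixF x = ixF y -> x = y.
Proof. move=> H; apply: val_inj; by rewrite -nth_ixF H nth_ixF. Qed.
Lemma ixG_inj x y : ixG x = ixG y -> x = y.
Proof. move=> H; apply: val_inj; by rewrite -nth_ixG H nth_ixG. Qed.

Lemma ssval_ixF (x : Vert F) : ssval x = nth [::] V (ixF x).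
Proof. exact: (esym (nth_ixF x)). Qed.
Lemma ssval_ixG (y : Vert G) : ssval y = nth [::] W (ixG y).
Proof. exact: (esym (nth_ixG y)). Qed.

Lemma eltF k : k < size V -> exists x : Vert F, ixF x = k.
Proof.
move=> Hk; have Hm : nth [::] V k \in verts F by rewrite memV mem_nth.
exists (SeqSub Hm); by rewrite /ixF /= index_uniq.
Qed.

Lemma S_char (s : {ffun Vert F -> Vert G}) : s \in S_set F G ->
  size V = size W /\ forall x, ixG (s x) = (size V).-1 - ixF x.
Proof.
rewrite inE => /and3P [/injectiveP Hinj /forallP Hsurj /forallP Hcond].
have Hn : size V = size W.
  rewrite -card_VF -card_VG; apply/eqP; rewrite eqn_leq (leq_card _ Hinj) /=.
  rewrite -cardsT (_ : [set: Vert G] = [set s x | x : Vert F]) ?leq_imset_card //.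
  apply/setP => y; rewrite inE; case/existsP: (Hsurj y) => x /eqP <-.
  by apply/esym/imsetP; exists x.
split=> // x.
have key : forall x y : Vert F, ixF y < ixF x -> ixG (s x) < ixG (s y).
  move=> x1 y1 Hlt.
  have Hne : x1 != y1 by apply/eqP => E; rewrite E ltnn in Hlt.
  have := forallP (Hcond x1) y1; rewrite Hne /= => /and4P [c1 c2 _ _].
  have hyx : geq_hl (val y1) (val x1).
    by rewrite -nth_ixF -(nth_ixF x1) ord_lt ?ixF_lt // neq_ltn Hlt.
  have hs : geq_hl (val (s x1)) (val (s y1)).
    change (is_true (geq_high (val y1) (val x1) ==> geq_left (val (s x1)) (val (s y1)))) in c1.
    change (is_true (geq_left (val y1) (val x1) ==> geq_hl (val (s x1)) (val (s y1)))) in c2.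
    move: hyx; rewrite {1}/geq_hl => /orP [h|h].
      by move: c1; rewrite h /= left_eq => /andP [].
    by move: c2; rewrite h.
  have Hne' : ixG (s x1) != ixG (s y1).
    by apply/eqP => /ixG_inj /Hinj E; rewrite E eqxx in Hne.
  by move: hs; rewrite -nth_ixG -(nth_ixG (s y1)) ord_lt ?ixG_lt.
pose g k := if k < size V then (if [pick z : Vert F | ixF z == k] is Some z then ixG (s z) else 0) else 0.
have gE : forall z, g (ixF z) = ixG (s z).
  move=> z; rewrite /g ixF_lt; case: pickP => [z' /eqP /ixF_inj -> //|].
  by move=> /(_ z); rewrite eqxx.
have gE' : forall k, k < size V -> exists z, ixF z = k /\ g k = ixG (s z).
  move=> k Hk; have [z Hz] := eltF Hk; exists z; by rewrite -Hz gE.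
rewrite -gE; apply: dec_rev; last exact: ixF_lt.
  move=> k Hk; have [z [_ ->]] := gE' k Hk; rewrite Hn; exact: ixG_lt.
move=> i j Hij Hj; have [z1 [e1 ->]] := gE' i ltac:(lia); have [z2 [e2 ->]] := gE' j Hj.
by apply: key; rewrite e1 e2.
Qed.

Lemma card_S : #|S_set F G| = scomp (fsig F) (fsig G).
Proof.
have sF : (fsig F).1 = size V by rewrite size_hl_from.
have sG : (fsig G).1 = size W by rewrite size_hl_from.
case: (eqVneq (size V) (size W)) => Hn; last first.
  rewrite (_ : scomp (fsig F) (fsig G) = false); last first.
    by apply/negbTE/negP => /scompP [e _]; move: Hn; rewrite -sF -sG e eqxx.
  apply/eqP; rewrite cards_eq0; apply/eqP/setP => s; rewrite in_set0.
  by apply/negbTE/negP => /S_char [e _]; move: Hn; rewrite e eqxx.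
have Hmem : forall x : Vert F, nth [::] W ((size V).-1 - ixF x) \in verts G.
  move=> x; rewrite memW; apply: mem_nth; rewrite -Hn; have := ixF_lt x; lia.
pose R : {ffun Vert F -> Vert G} := [ffun x => SeqSub (Hmem x)].
have ixR : forall x, ixG (R x) = (size V).-1 - ixF x.
  move=> x; rewrite /ixG ffunE /= index_uniq //; rewrite -Hn; have := ixF_lt x; lia.
have uniqR : forall s, s \in S_set F G -> s = R.
  move=> s /S_char [_ H]; apply/ffunP => x; apply: ixG_inj; by rewrite H ixR.
have HR : (R \in S_set F G) = scomp (fsig F) (fsig G).
  rewrite inE.
  have -> : injectiveb R.
    apply/injectiveP => x y /(congr1 ixG); rewrite !ixR => H; apply: ixF_inj.
    have := ixF_lt x; have := ixF_lt y; lia.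
  have -> : [forall y, exists x, R x == y].
    apply/forallP => y; have Hk : (size V).-1 - ixG y < size V by have := ixG_lt y; lia.
    have [x Hx] := eltF Hk.
    apply/existsP; exists x; apply/eqP; apply: ixG_inj; rewrite ixR Hx; have := ixG_lt y; lia.
  rewrite /=.
  apply/forallP/scompP => [H | [_ H]].
  - split; first by rewrite sF sG.
    move=> i j Hi Hj.
    have Hi2 : (fsig F).1.-1 - j < (fsig G).1 by rewrite sG -Hn -sF; lia.
    have Hj2 : (fsig F).1.-1 - i < (fsig G).1 by rewrite sG -Hn -sF; lia.
    rewrite (@anc_from F 0 i j Hi Hj) (@anc_from G 0 _ _ Hi2 Hj2).
    rewrite sF in Hi Hj *.
    case: (eqVneq i j) => [->|Hij] //=.
    have [y Hy] := eltF Hi; have [x Hx] := eltF Hj.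
    have Hxy : x != y by apply/eqP => E; move: Hij; rewrite -Hx -Hy E eqxx.
    have := forallP (H x) y; rewrite Hxy /= !ssval_ixF !ssval_ixG !ixR Hx Hy.
    rewrite (cond_equiv HV HW Hn Hi Hj Hij).
    rewrite (_ : (size V).-1 - j != (size V).-1 - i) /=; last by lia.
    by case/andP.
  - have H' : forall i j, i < size V -> j < size V -> i != j ->
        ~~ (geq_high (nth [::] V i) (nth [::] V j) &&
            geq_high (nth [::] W ((size V).-1 - j)) (nth [::] W ((size V).-1 - i))).
      move=> i j Hi Hj Hij.
      have Hi1 : i < (fsig F).1 by rewrite sF.
      have Hj1 : j < (fsig F).1 by rewrite sF.
      have := H i j Hi1 Hj1.
      have Hi2 : (fsig F).1.-1 - j < (fsig G).1 by rewrite sG -Hn -sF; lia.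
      have Hj2 : (fsig F).1.-1 - i < (fsig G).1 by rewrite sG -Hn -sF; lia.
      rewrite (@anc_from F 0 i j Hi1 Hj1) (@anc_from G 0 _ _ Hi2 Hj2) sF Hij /=.
      by rewrite (_ : (size V).-1 - j != (size V).-1 - i) /=; last by lia.
    move=> x; apply/forallP => y; apply/implyP => Hxy.
    rewrite !ssval_ixF !ssval_ixG !ixR.
    have Hij : ixF y != ixF x by apply: contra Hxy => /eqP /ixF_inj ->.
    rewrite (cond_equiv HV HW Hn (ixF_lt y) (ixF_lt x) Hij).
    apply/andP; split; first by apply: H'; [exact: ixF_lt | exact: ixF_lt | exact: Hij].
    by rewrite andbC; apply: H'; [exact: ixF_lt | exact: ixF_lt | rewrite eq_sym].
case: (boolP (R \in S_set F G)) => HRin.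
  have E : S_set F G =i [set R].
    by move=> s; rewrite in_set1; apply/idP/eqP => [/uniqR|->].
  by rewrite (eq_card E) cards1 -HR HRin.
have E : S_set F G =i set0.
  move=> s; rewrite in_set0; apply/negbTE; apply: contra HRin => Hs.
  by rewrite -(uniqR s Hs).
by rewrite (eq_card E) cards0 -HR (negbTE HRin).
Qed.
End Link.

Unset Implicit Arguments.
Local Open Scope ring_scope.

Theorem theorem24 (K : fieldType) (b : pforest -> pforest -> K) :
  is_pairing b -> forall F G : pforest, b F G = (#|S_set F G|)%:R.
Proof.
move=> Hb F G; by rewrite (b_comp Hb) card_S.
Qed.
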